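(* There exists a universal constant $C>0$ such that the following holds. Let $\mathcal{X}$ be a set, let $\{\rho(\boldsymbol\theta)\}_{\boldsymbol\theta\in\Theta}$ be any family of $n$-qubit density matrices, and let $\mathbf{x}\mapsto O(\mathbf{x})$ assign to each $\mathbf{x}\in\mathcal{X}$ a Hermitian operator on $n$ qubits, with $\|O\|_\infty:=\sup_{\mathbf{x}\in\mathcal{X}}\|O(\mathbf{x})\|_\infty<\infty$. Let $\mathcal{C}_{n,O}=\{f_{\boldsymbol\theta}:\boldsymbol\theta\in\Theta\}$ with $f_{\boldsymbol\theta}(\mathbf{x})=\operatorname{Tr}[\rho(\boldsymbol\theta)O(\mathbf{x})]$. Then for every $\gamma>0$, $\mathrm{fat}_{\mathcal{C}_{n,O}}(\gamma)\le C\, n\|O\|_\infty^2/\gamma^2$.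
   Context: $\|A\|_\infty$ is the spectral norm. For a class $\mathcal{C}$ of functions $\mathcal{X}\to\mathbb{R}$ and $\gamma>0$, the fat-shattering dimension $\mathrm{fat}_{\mathcal{C}}(\gamma)$ is the largest $k$ such that there exist points $\mathbf{x}^{(1)},\ldots,\mathbf{x}^{(k)}\in\mathcal{X}$ and reals $\alpha_1,\ldots,\alpha_k$ such that for every $\mathbf{y}\in\{0,1\}^k$ there is $f\in\mathcal{C}$ with $f(\mathbf{x}^{(i)})\le\alpha_i-\gamma$ whenever $y_i=0$ and $f(\mathbf{x}^{(i)})\ge\alpha_i+\gamma$ whenever $y_i=1$, for all $i$. *)

(* Defs.v *)
From HB Require Import structures.
From mathcomp Require Import all_boot all_order all_algebra.
From mathcomp Require Import boolp classical_sets reals.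
From mathcomp Require Import complex.
Set Implicit Arguments. Unset Strict Implicit. Unset Printing Implicit Defensive.
Import Order.TTheory GRing.Theory Num.Theory.
Local Open Scope ring_scope.
Local Open Scope classical_set_scope.

Section QDefs.
Variable R : realType.
Local Notation C := (R[i]).

Definition adjmx (m n : nat) (A : 'M[C]_(m, n)) : 'M[C]_(n, m) :=
  (map_mx (@conjc R) A)^T.

Definition is_hermitian (d : nat) (A : 'M[C]_d) : Prop := adjmx A = A.

(* positive semidefinite: v^* A v >= 0 (i.e. real and nonnegative) for all v *)
Definition psd (d : nat) (A : 'M[C]_d) : Prop :=
  forall v : 'cV[C]_d, 0 <= (adjmx v *m A *m v) 0 0.

Definition density_matrix (d : nat) (A : 'M[C]_d) : Prop :=
  is_hermitian A /\ psd A /\ \tr A = 1.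

Definition vnorm (d : nat) (v : 'cV[C]_d) : R :=
  Num.sqrt (\sum_i (complex.Re (v i 0) ^+ 2 + complex.Im (v i 0) ^+ 2)).

Definition spectral_norm (d : nat) (A : 'M[C]_d) : R :=
  sup [set vnorm (A *m v) | v in [set v : 'cV[C]_d | vnorm v = 1]].

Definition spectral_norms (X : Type) (d : nat) (O : X -> 'M[C]_d) : set R :=
  [set spectral_norm (O x) | x in [set: X]].

Definition sup_spectral_norm (X : Type) (d : nat) (O : X -> 'M[C]_d) : R :=
  sup (spectral_norms O).

Definition fat_shatters (X : Type) (Cl : set (X -> R)) (gamma : R) (k : nat)
  : Prop :=
  exists (pts : 'I_k -> X) (alpha : 'I_k -> R),
    forall y : 'I_k -> bool, exists2 f, Cl f &
      forall i : 'I_k,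
        if y i then alpha i + gamma <= f (pts i) else f (pts i) <= alpha i - gamma.

Definition trace_class (X Theta : Type) (n : nat)
  (rho : Theta -> 'M[C]_(2 ^ n)) (O : X -> 'M[C]_(2 ^ n)) : set (X -> R) :=
  [set (fun x => complex.Re (\tr (rho th *m O x))) | th in [set: Theta]].

End QDefs.

(* Main.v *)
Require Import Defs.
From HB Require Import structures.
From mathcomp Require Import all_boot all_order all_algebra.
From mathcomp Require Import boolp classical_sets reals.
From mathcomp Require Import complex.
Import Order.TTheory GRing.Theory Num.Theory.
Local Open Scope ring_scope.
Local Open Scope classical_set_scope.
From HB Require Import structures.
From mathcomp Require Import all_boot all_order all_algebra.
From mathcomp Require Import boolp classical_sets reals.
From mathcomp Require Import complex spectral sesquilinear.
From mathcomp Require Import lra ring zify.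
From Stdlib Require Import Lia.
Set Implicit Arguments. Unset Strict Implicit. Unset Printing Implicit Defensive.
Import Order.TTheory GRing.Theory Num.Theory.
Local Open Scope ring_scope.
Local Open Scope classical_set_scope.
Section T. Variable R : realFieldType.
Lemma even_norm (x : R) p : `|x| ^+ (2 * p) = x ^+ (2 * p).
Proof. by rewrite !exprM real_normK ?num_real. Qed.
Lemma even_ge0 (x : R) p : 0 <= x ^+ (2 * p).
Proof. by rewrite exprM exprn_ge0 // sqr_ge0. Qed.
Lemma term_le (x y : R) p i : (i <= 2 * p)%N ->
  x ^+ (2 * p - i) * y ^+ i <= x ^+ (2 * p) + y ^+ (2 * p).
Proof.
move=> hi.
apply: (le_trans (ler_norm _)); rewrite normrM !normrX.
wlog hxy : x y i hi / `|x| <= `|y|.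
  move=> H; case: (lerP `|x| `|y|) => h; first exact: H.
  rewrite mulrC addrC.
  have := H y x (2 * p - i)%N (leq_subr _ _) (ltW h).
  by rewrite subKn.
apply: (@le_trans _ _ (`|y| ^+ (2 * p - i) * `|y| ^+ i)).
  apply: ler_wpM2r; first exact: exprn_ge0.
  by rewrite lerXn2r // nnegrE.
by rewrite -exprD subnK // even_norm lerDr even_ge0.
Qed.
Variable k : nat.

Definition sgR (b : bool) : R := if b then 1 else -1.
Definition Ssum (e : {ffun 'I_k -> bool}) : R := \sum_j sgR (e j).
Definition Dmom (m : nat) : R := \sum_(e : {ffun 'I_k -> bool}) Ssum e ^+ m.

Definition flip (j : 'I_k) (e : {ffun 'I_k -> bool}) : {ffun 'I_k -> bool} :=
  [ffun i => if i == j then ~~ e i else e i].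

Lemma flipK j : involutive (flip j).
Proof. by move=> e; apply/ffunP=> i; rewrite !ffunE; case: eqP => // _; rewrite negbK. Qed.

Lemma sgR2 b : sgR b ^+ 2 = 1.
Proof. by case: b; rewrite /= ?sqrrN expr1n. Qed.

Lemma sgR_neg b : sgR (~~ b) = - sgR b.
Proof. by case: b; rewrite /= ?opprK. Qed.

Lemma Ssum_flip j e : Ssum (flip j e) = Ssum e - 2%:R * sgR (e j).
Proof.
rewrite /Ssum (bigD1 j) //= [in RHS](bigD1 j) //= ffunE eqxx sgR_neg.
rewrite (eq_bigr (fun i => sgR (e i))); last first.
  by move=> i /negbTE hi; rewrite ffunE hi.
rewrite mulr2n mulrDl mul1r; lra.
Qed.

Lemma pt_step (a s : R) p : s ^+ 2 = 1 ->
  s * (a ^+ (2 * p).+1 - (a - 2%:R * s) ^+ (2 * p).+1)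
  <= 2%:R * (2 * p).+1%:R * (a ^+ (2 * p) + (a - 2%:R * s) ^+ (2 * p)).
Proof.
move=> hs; rewrite subrXX /= mulrA.
have -> : s * (a - (a - 2%:R * s)) = 2%:R by rewrite opprB addrC subrK mulrC -mulrA -expr2 hs mulr1.
rewrite -mulrA ler_wpM2l //.
apply: (@le_trans _ _ (\sum_(i < (2 * p).+1) (a ^+ (2 * p) + (a - 2%:R * s) ^+ (2 * p)))).
  apply: ler_sum => i _.
  have := ltn_ord i; rewrite ltnS => hi.
  exact: term_le.
by rewrite sumr_const card_ord [X in _ <= X]mulr_natl.
Qed.

Lemma Dstep p : Dmom (2 * p).+2 <= 2%:R * (2 * p).+1%:R * k%:R * Dmom (2 * p).
Proof.
rewrite /Dmom.
have E : forall e, Ssum e ^+ (2 * p).+2 = \sum_j sgR (e j) * Ssum e ^+ (2 * p).+1.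
  by move=> e; rewrite exprS mulrC {2}/Ssum mulr_sumr; apply: eq_bigr => j _; rewrite mulrC.
rewrite (eq_bigr _ (fun e _ => E e)) exchange_big /=.
apply: (@le_trans _ _ (\sum_(j : 'I_k) (2%:R * (2 * p).+1%:R * \sum_(e : {ffun 'I_k -> bool}) Ssum e ^+ (2 * p)))); last first.
  by rewrite sumr_const card_ord [X in _ <= X]mulrAC [X in _ <= X]mulr_natr.
apply: ler_sum => j _.
set G := fun e : {ffun 'I_k -> bool} => sgR (e j) * Ssum e ^+ (2 * p).+1.
have HG : \sum_e G e = \sum_e G (flip j e).
  exact: (reindex_inj (can_inj (flipK j))).
have HD : \sum_(e : {ffun 'I_k -> bool}) Ssum e ^+ (2 * p) = \sum_e Ssum (flip j e) ^+ (2 * p).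
  exact: (reindex_inj (can_inj (flipK j))).
have H2 : \sum_e G e + \sum_e G (flip j e) <= 2%:R * (2 * p).+1%:R * (\sum_(e : {ffun 'I_k -> bool}) Ssum e ^+ (2 * p) + \sum_e Ssum (flip j e) ^+ (2 * p)).
  rewrite -!big_split /= mulr_sumr.
  apply: ler_sum => e _; rewrite /G Ssum_flip ffunE eqxx sgR_neg.
  move: (pt_step (Ssum e) p (sgR2 (e j))).
  by rewrite mulrBr mulNr.
rewrite -HG -HD mulrDr in H2.
move: H2; set x := \sum_e G e; set y := _ * \sum__ _.
move=> H2; lra.
Qed.

Lemma Dmom0 : Dmom 0 = 2%:R ^+ k.
Proof.
rewrite /Dmom (eq_bigr (fun _ => 1)) ?sumr_const; last by move=> *; rewrite expr0.
by rewrite card_ffun card_bool card_ord natrX.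
Qed.

Lemma Dmom_ge0 p : 0 <= Dmom (2 * p).
Proof. by apply: sumr_ge0 => e _; exact: even_ge0. Qed.

Lemma Dbound p : Dmom (2 * p) <= 2%:R ^+ k * (4 * p * k)%:R ^+ p.
Proof.
elim: p => [|p IH]; first by rewrite muln0 Dmom0 expr0 mulr1.
have -> : (2 * p.+1 = (2 * p).+2)%N by rewrite mulnS addnC addn2.
apply: (le_trans (Dstep p)).
apply: (@le_trans _ _ (2%:R * (2 * p).+1%:R * k%:R * (2%:R ^+ k * (4 * p * k)%:R ^+ p))).
  by apply: ler_wpM2l => //; rewrite !mulr_ge0.
rewrite mulrCA exprS; apply: ler_wpM2l; first exact: exprn_ge0.
apply: ler_pM.
- by rewrite !mulr_ge0.
- exact: exprn_ge0.
- by rewrite -!natrM ler_nat; lia.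
- by rewrite lerXn2r // ?nnegrE ?ler_nat //; lia.
Qed.
End T.

Section Expand.
Variables (F : comNzRingType) (A : algType F) (k : nat) (sg : bool -> F) (M : 'I_k -> A).
Definition Tsum (e : {ffun 'I_k -> bool}) : A := \sum_j sg (e j) *: M j.
Lemma Tsum_expand m e : Tsum e ^+ m =
  \sum_(f : {ffun 'I_m -> 'I_k}) (\prod_i sg (e (f i))) *: \prod_i M (f i).
Proof.
have -> : Tsum e ^+ m = \prod_(i < m) Tsum e by rewrite prodr_const card_ord.
rewrite /Tsum bigA_distr_bigA; apply: eq_bigr => f _; exact: scaler_prod.
Qed.
Definition cf m (f : {ffun 'I_m -> 'I_k}) : F :=
  \sum_(e : {ffun 'I_k -> bool}) \prod_i sg (e (f i)).
Lemma sum_Tsum m : \sum_e Tsum e ^+ m = \sum_f cf f *: \prod_(i < m) M (f i).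
Proof.
under eq_bigr do rewrite Tsum_expand.
rewrite exchange_big; apply: eq_bigr => f _; by rewrite scaler_suml.
Qed.
End Expand.
Lemma sum_Tsum1 (F : comNzRingType) (A : algType F) (k : nat) (sg : bool -> F) m : \sum_(e : {ffun 'I_k -> bool}) (\sum_j sg (e j)) ^+ m *: (1 : A) =
  \sum_(f : {ffun 'I_m -> 'I_k}) cf sg f *: (1 : A).
Proof.
have := sum_Tsum sg (fun _ : 'I_k => (1 : A)) m; rewrite /Tsum.
under eq_bigr do rewrite -scaler_suml exprZn expr1n.
by under [X in _ = X -> _]eq_bigr do rewrite prodr_const expr1n.
Qed.

Lemma cf_ge0 (F : numDomainType) (k m : nat) (f : {ffun 'I_m -> 'I_k}) :
  0 <= cf (fun b : bool => if b then 1 else -1 : F) f.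
Proof.
rewrite /cf.
have E : forall e : {ffun 'I_k -> bool},
   \prod_i (if e (f i) then 1 else -1 : F) =
   \prod_(j : 'I_k) (if e j then 1 else -1) ^+ #|[pred i | f i == j]|.
  move=> e; rewrite (partition_big (fun i => f i) predT) //=.
  apply: eq_bigr => j _.
  rewrite -prodr_const; apply: eq_big => // i.
  by move=> /eqP ->.
rewrite (eq_bigr _ (fun e _ => E e)).
rewrite -(bigA_distr_bigA (fun j b => (if b then 1 else -1 : F) ^+ #|[pred i | f i == j]|)).
apply: prodr_ge0 => j _.
rewrite big_bool /= expr1n -signr_odd.
case: (odd _); rewrite /= ?expr1 ?expr0 ?subrr //.
by rewrite -(natrD F 1 1) ler0n.
Qed.

Local Open Scope classical_set_scope.
Section Norms.
Variable R : realType.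
Local Notation C := (R[i]).

Definition cn (z : C) : R := Num.sqrt (complex.Re z ^+ 2 + complex.Im z ^+ 2).

Lemma cnE z : (cn z)%:C%C = `|z|.
Proof. by rewrite normc_def. Qed.

Lemma cn_ge0 z : 0 <= cn z.
Proof. exact: sqrtr_ge0. Qed.

Lemma cn2 z : cn z ^+ 2 = complex.Re z ^+ 2 + complex.Im z ^+ 2.
Proof. by rewrite sqr_sqrtr // addr_ge0 // sqr_ge0. Qed.

Lemma cn_le_C (x y : R) : (x%:C%C <= y%:C%C) = (x <= y).
Proof. exact: lecR. Qed.

Lemma cnD z w : cn (z + w) <= cn z + cn w.
Proof. by rewrite -cn_le_C rmorphD /= !cnE ler_normD. Qed.

Lemma cnM z w : cn (z * w) = cn z * cn w.
Proof. by apply: complexI; rewrite rmorphM /= !cnE normrM. Qed.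

Lemma cn_sum (I : finType) (F : I -> C) : cn (\sum_i F i) <= \sum_i cn (F i).
Proof.
rewrite -cn_le_C cnE rmorph_sum /=.
by apply: (le_trans (ler_norm_sum _ _ _)); apply: ler_sum => i _; rewrite cnE.
Qed.

Lemma vnorm2 d (v : 'cV[C]_d) : vnorm v ^+ 2 = \sum_i cn (v i 0) ^+ 2.
Proof.
rewrite /vnorm sqr_sqrtr; last by apply: sumr_ge0 => i _; rewrite addr_ge0 ?sqr_ge0.
by apply: eq_bigr => i _; rewrite cn2.
Qed.

Lemma vnorm_ge0 d (v : 'cV[C]_d) : 0 <= vnorm v.
Proof. exact: sqrtr_ge0. Qed.

Lemma vnorm_sqrt d (v : 'cV[C]_d) : vnorm v = Num.sqrt (\sum_i cn (v i 0) ^+ 2).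
Proof. by rewrite -vnorm2 sqrtr_sqr ger0_norm ?vnorm_ge0. Qed.

Lemma comp_le d (v : 'cV[C]_d) i : cn (v i 0) <= vnorm v.
Proof.
rewrite -(ler_pXn2r (_ : (0 < 2)%N)) ?nnegrE ?cn_ge0 ?vnorm_ge0 //.
rewrite vnorm2 (bigD1 i) //= lerDl; apply: sumr_ge0 => j _; exact: sqr_ge0.
Qed.

Lemma vnormZ d (r : R) (v : 'cV[C]_d) : 0 <= r -> vnorm (r%:C%C *: v) = r * vnorm v.
Proof.
move=> hr; rewrite !vnorm_sqrt.
have -> : \sum_i cn ((r%:C%C *: v) i 0) ^+ 2 = r ^+ 2 * \sum_i cn (v i 0) ^+ 2.
  rewrite mulr_sumr; apply: eq_bigr => i _; rewrite mxE cnM exprMn; congr (_ * _).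
  by rewrite /cn /= expr0n addr0 sqrtr_sqr ger0_norm.
by rewrite sqrtrM ?sqr_ge0 // sqrtr_sqr ger0_norm.
Qed.

Lemma vnorm_delta d (i : 'I_d) : vnorm (delta_mx i 0 : 'cV[C]_d) = 1.
Proof.
rewrite vnorm_sqrt (bigD1 i) //= big1 ?addr0.
  by rewrite mxE !eqxx /= /cn /= expr1n expr0n addr0 !sqrtr1 expr1n sqrtr1.
by move=> j /negbTE hj; rewrite mxE hj /= /cn /= expr0n addr0 sqrtr0 expr0n.
Qed.

Lemma sq_sum_le (I : finType) (x : I -> R) : (forall i, 0 <= x i) ->
  \sum_i x i ^+ 2 <= (\sum_i x i) ^+ 2.
Proof.
move=> h; rewrite expr2 mulr_suml; apply: ler_sum => i _.
rewrite expr2; apply: ler_wpM2l => //.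
by rewrite (bigD1 i) //= lerDl sumr_ge0.
Qed.

Lemma vnorm_le_sum d (v : 'cV[C]_d) : vnorm v <= \sum_i cn (v i 0).
Proof.
rewrite -(ler_pXn2r (_ : (0 < 2)%N)) ?nnegrE ?vnorm_ge0 ?sumr_ge0 // => [|i _]; last exact: cn_ge0.
by rewrite vnorm2 sq_sum_le // => i; exact: cn_ge0.
Qed.

Lemma vnorm_mul_le d (A : 'M[C]_d) (v : 'cV[C]_d) :
  vnorm (A *m v) <= (\sum_i \sum_j cn (A i j)) * vnorm v.
Proof.
apply: (le_trans (vnorm_le_sum _)); rewrite mulr_suml; apply: ler_sum => i _.
rewrite mxE mulr_suml; apply: (le_trans (cn_sum _)); apply: ler_sum => j _.
by rewrite cnM ler_wpM2l ?cn_ge0 ?comp_le.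
Qed.

Lemma inner_ub d (A : 'M[C]_d) :
  has_ubound [set vnorm (A *m v) | v in [set v : 'cV[C]_d | vnorm v = 1]].
Proof.
exists (\sum_i \sum_j cn (A i j)) => _ [v /= hv <-].
by have := vnorm_mul_le A v; rewrite hv mulr1.
Qed.

Lemma spec_le d (A : 'M[C]_d) v : vnorm v = 1 -> vnorm (A *m v) <= spectral_norm A.
Proof. by move=> hv; apply: (ub_le_sup (inner_ub A)); exists v. Qed.

Lemma vnorm_eq0_mul d (A : 'M[C]_d) (v : 'cV[C]_d) : vnorm v = 0 -> vnorm (A *m v) = 0.
Proof.
move=> h; apply/eqP; rewrite eq_le vnorm_ge0 andbT.
by have := vnorm_mul_le A v; rewrite h mulr0.
Qed.

Lemma op_bound d (A : 'M[C]_d) v : vnorm (A *m v) <= spectral_norm A * vnorm v.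
Proof.
have [h0|hpos] := eqVneq (vnorm v) 0.
  by rewrite h0 mulr0 vnorm_eq0_mul.
have hr : 0 < vnorm v by rewrite lt_def hpos vnorm_ge0.
set u := ((vnorm v)^-1)%:C%C *: v.
have hu : vnorm u = 1 by rewrite /u vnormZ ?invr_ge0 ?vnorm_ge0 // mulVf.
have := spec_le A hu; rewrite /u -scalemxAr vnormZ ?invr_ge0 ?vnorm_ge0 //.
by rewrite mulrC => h; rewrite -ler_pdivrMr.
Qed.

Lemma prod_bound N (B : R) : 0 <= B -> forall m (g : 'I_m -> 'M[C]_N.+1),
  (forall i v, vnorm (g i *m v) <= B * vnorm v) ->
  forall v, vnorm ((\prod_i g i) *m v) <= B ^+ m * vnorm v.
Proof.
move=> hB; elim=> [|m IH] g hg v.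
  by rewrite big_ord0 expr0 mul1r mul1mx.
rewrite big_ord_recl -mulmxA exprS -mulrA.
apply: (le_trans (hg _ _)); apply: ler_wpM2l => //.
exact: (IH (fun i => g (lift ord0 i))).
Qed.

Lemma tr_bound d (W : 'M[C]_d) (b : R) :
  (forall v, vnorm (W *m v) <= b * vnorm v) -> `|\tr W| <= (d%:R * b)%:C%C.
Proof.
move=> hW; rewrite /mxtrace; apply: (le_trans (ler_norm_sum _ _ _)).
apply: (@le_trans _ _ (\sum_(i < d) b%:C%C)); last first.
  by rewrite sumr_const card_ord rmorphM /= rmorph_nat mulr_natl.
apply: ler_sum => i _; rewrite -cnE cn_le_C.
have -> : W i i = (W *m (delta_mx i 0 : 'cV[C]_d)) i 0.
  rewrite mxE (bigD1 i) //= mxE !eqxx mulr1 big1 ?addr0 // => j /negbTE hj.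
  by rewrite mxE hj mulr0.
apply: (le_trans (comp_le _ _)); have := hW (delta_mx i 0).
by rewrite vnorm_delta mulr1.
Qed.
End Norms.

Section RealJensen.
Variable R : realFieldType.
Lemma cs_w (I : finType) (a x : I -> R) : (forall i, 0 <= a i) -> \sum_i a i = 1 ->
  (\sum_i a i * x i) ^+ 2 <= \sum_i a i * x i ^+ 2.
Proof.
move=> ha hs; set mu := \sum_i a i * x i.
have h0 : 0 <= \sum_i a i * (x i - mu) ^+ 2.
  by apply: sumr_ge0 => i _; rewrite mulr_ge0 ?sqr_ge0.
have E : \sum_i a i * (x i - mu) ^+ 2 =
   \sum_i a i * x i ^+ 2 - 2%:R * mu * \sum_i a i * x i + mu ^+ 2 * \sum_i a i.
  rewrite (eq_bigr (fun i => a i * x i ^+ 2 - 2%:R * mu * (a i * x i) + mu ^+ 2 * a i)); last by move=> i _; ring.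
  by rewrite big_split sumrB /= -!mulr_sumr.
rewrite E hs -/mu mulr1 in h0; lra.
Qed.

Lemma jensen_w (I : finType) (a x : I -> R) r : (forall i, 0 <= a i) -> \sum_i a i = 1 ->
  (\sum_i a i * x i) ^+ (2 ^ r.+1) <= \sum_i a i * x i ^+ (2 ^ r.+1).
Proof.
move=> ha hs; elim: r => [|r IH]; first by rewrite expn1 cs_w.
rewrite expnS mulnC exprM.
apply: (@le_trans _ _ ((\sum_i a i * x i ^+ (2 ^ r.+1)) ^+ 2)).
  rewrite lerXn2r // nnegrE.
    by rewrite expnS mulnC exprM sqr_ge0.
  by apply: sumr_ge0 => i _; rewrite mulr_ge0 // expnS mulnC exprM sqr_ge0.
apply: (le_trans (cs_w (fun i => x i ^+ (2 ^ r.+1)) ha hs)).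
by apply: ler_sum => i _; rewrite -exprM mulnC -expnS.
Qed.

Lemma jensen_drop (I : finType) (a x : I -> R) r : (forall i, 0 <= a i) -> \sum_i a i = 1 ->
  (\sum_i a i * x i) ^+ (2 ^ r.+1) <= \sum_i x i ^+ (2 ^ r.+1).
Proof.
move=> ha hs; apply: (le_trans (jensen_w x r ha hs)); apply: ler_sum => i _.
have hx : 0 <= x i ^+ (2 ^ r.+1) by rewrite expnS mulnC exprM sqr_ge0.
rewrite -[X in _ <= X]mul1r ler_wpM2r //.
by rewrite -hs (bigD1 i) //= lerDl sumr_ge0.
Qed.
End RealJensen.

Section Spec.
Variable R : realType.
Local Notation C := (R[i]).
Local Open Scope sesquilinear_scope.

Lemma herm_sym N (T : 'M[C]_N) : is_hermitian T -> T \is hermsymmx.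
Proof.
rewrite /is_hermitian /adjmx => h; rewrite qualifE /= expr0 scale1r.
apply/eqP; rewrite -[LHS]h; apply/matrixP => i j; rewrite !mxE; by [].
Qed.

Lemma spec_pow N (T : 'M[C]_N.+1) m : T \is normalmx ->
  T ^+ m.+1 = invmx (spectralmx T) *m diag_mx (\row_j (spectral_diag T 0 j ^+ m.+1)) *m spectralmx T.
Proof.
move=> /orthomx_spectralP hT.
have hU := spectral_unit T.
elim: m => [|m IH].
  rewrite expr1 {1}hT; congr (_ *m _ *m _); congr diag_mx.
  by apply/rowP => j; rewrite mxE expr1.
rewrite exprS IH {1}hT -mulmxE -!mulmxA; congr (_ *m _).
rewrite (mulmxA (spectralmx T)) mulmxV // mul1mx mulmxA; congr (_ *m _).
rewrite mul_diag_mx; apply/matrixP => i j; rewrite !mxE.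
by case: (_ == _); rewrite ?mulr1n ?mulr0n ?mulr0 ?exprS.
Qed.

Lemma tr_conj N (P X : 'M[C]_N) : P \in unitmx -> \tr (invmx P *m X *m P) = \tr X.
Proof. by move=> hP; rewrite mxtrace_mulC mulmxA mulmxV // mul1mx. Qed.

Lemma tr_pow_sum N (T : 'M[C]_N.+1) m : T \is normalmx ->
  \tr (T ^+ m.+1) = \sum_j spectral_diag T 0 j ^+ m.+1.
Proof.
move=> hT; rewrite spec_pow // tr_conj ?spectral_unit // mxtrace_diag.
by apply: eq_bigr => j _; rewrite mxE.
Qed.

Lemma tr_rhoT N (rho T : 'M[C]_N) : T \is normalmx ->
  \tr (rho *m T) = \sum_j (spectralmx T *m rho *m invmx (spectralmx T)) j j * spectral_diag T 0 j.
Proof.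
move=> /orthomx_spectralP hT; rewrite {1}hT !mulmxA mxtrace_mulC !mulmxA.
by rewrite /mxtrace; apply: eq_bigr => j _; rewrite mul_mx_diag mxE.
Qed.

Lemma w_ge0 N (rho P : 'M[C]_N) j : psd rho -> P \is unitarymx ->
  0 <= (P *m rho *m invmx P) j j.
Proof.
move=> hrho hP; rewrite invmx_unitary //.
have := hrho (adjmx (row j P)).
have -> : (adjmx (adjmx (row j P)) *m rho *m adjmx (row j P)) 0 0 = (P *m rho *m P ^t*) j j.
  rewrite !mxE; apply: eq_bigr => l _; rewrite !mxE; congr (_ * _).
  by apply: eq_bigr => k _; rewrite !mxE conjcK.
by [].
Qed.

Lemma w_sum N (rho P : 'M[C]_N) : \tr rho = 1 -> P \in unitmx ->
  \sum_j (P *m rho *m invmx P) j j = 1.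
Proof.
move=> hr hP; have -> : \sum_j (P *m rho *m invmx P) j j = \tr (P *m rho *m invmx P) by [].
by rewrite -mulmxA mxtrace_mulC -mulmxA mulVmx // mulmx1.
Qed.

Lemma jensen_tr N (rho T : 'M[C]_N.+1) r : psd rho -> \tr rho = 1 -> is_hermitian T ->
  (complex.Re (\tr (rho *m T))) ^+ (2 ^ r.+1) <= complex.Re (\tr (T ^+ (2 ^ r.+1))).
Proof.
move=> hrho htr /herm_sym hH; have hN := hermitian_normalmx hH.
have /mxOverP hreal := hermitian_spectral_diag_real hH.
set P := spectralmx T; set D := spectral_diag T.
have hPu : P \is unitarymx := spectral_unitarymx T.
have hPi : P \in unitmx := spectral_unit T.
set w := fun j => (P *m rho *m invmx P) j j.
have hw0 : forall j, 0 <= w j by move=> j; exact: w_ge0.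
have hwR : forall j, w j = (complex.Re (w j))%:C%C.
  by move=> j; rewrite RRe_real // ger0_real.
have hlR : forall j, D 0 j = (complex.Re (D 0 j))%:C%C.
  by move=> j; rewrite RRe_real // hreal.
have ha0 : forall j, 0 <= complex.Re (w j).
  by move=> j; rewrite -lecR -hwR.
have has : \sum_j complex.Re (w j) = 1.
  apply: complexI; rewrite rmorph_sum rmorph1 /= -(w_sum htr hPi).
  by apply: eq_bigr => j _; rewrite -hwR.
have E1 : complex.Re (\tr (rho *m T)) = \sum_j complex.Re (w j) * complex.Re (D 0 j).
  rewrite tr_rhoT // -/P -/D.
  have -> : \sum_j (P *m rho *m invmx P) j j * D 0 j =
            (\sum_j complex.Re (w j) * complex.Re (D 0 j))%:C%C.
    rewrite rmorph_sum /=; apply: eq_bigr => j _; rewrite rmorphM /= -hwR -hlR //.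
  by [].
have E2 : complex.Re (\tr (T ^+ (2 ^ r.+1))) = \sum_j complex.Re (D 0 j) ^+ (2 ^ r.+1).
  rewrite -(prednK (expn_gt0 2 r.+1)) tr_pow_sum // -/D.
  have -> : \sum_j D 0 j ^+ (2 ^ r.+1).-1.+1 = (\sum_j complex.Re (D 0 j) ^+ (2 ^ r.+1).-1.+1)%:C%C.
    rewrite rmorph_sum /=; apply: eq_bigr => j _; rewrite rmorphXn /= -hlR //.
  by [].
rewrite E1 E2; exact: jensen_drop.
Qed.
End Spec.


Section Assemble.
Variable R : realType.
Local Notation C := (R[i]).

Definition sgC (b : bool) : C := if b then 1 else -1.

Lemma sgCE b : sgC b = (sgR R b)%:C%C.
Proof. by case: b; rewrite /= ?rmorph1 ?rmorphN1. Qed.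

Lemma ReD (x y : C) : complex.Re (x + y) = complex.Re x + complex.Re y.
Proof. by case: x; case: y. Qed.

Lemma Re_sum (I : finType) (F : I -> C) : complex.Re (\sum_i F i) = \sum_i complex.Re (F i).
Proof. by elim/big_rec2: _ => // i a b _ <-; rewrite ReD. Qed.

Lemma Re_sg b (z : C) : complex.Re (sgC b * z) = sgR R b * complex.Re z.
Proof. by case: b; case: z => a c /=; rewrite ?oppr0 mul0r subr0. Qed.

Lemma Re_le_cn (z : C) : complex.Re z <= cn z.
Proof.
apply: (le_trans (ler_norm _)); rewrite -lecR cnE; exact: normc_ge_Re.
Qed.

Lemma herm_Tsum N k (M : 'I_k -> 'M[C]_N.+1) e : (forall j, is_hermitian (M j)) ->
  is_hermitian (Tsum sgC M e).
Proof.
move=> hM; rewrite /is_hermitian /adjmx; apply/matrixP => a b; rewrite !mxE /Tsum !summxE.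
rewrite rmorph_sum /=; apply: eq_bigr => j _; rewrite !mxE rmorphM /=.
have -> : conjc (sgC (e j)) = sgC (e j).
  by case: (e j); apply/eqP; rewrite eq_complex /= ?oppr0 ?eqxx.
congr (_ * _); have h := hM j; rewrite /is_hermitian in h; have := congr1 (fun A : 'M[C]_N.+1 => A a b) h; rewrite /adjmx !mxE; by [].
Qed.

Lemma tr_sum N (I : finType) (F : I -> 'M[C]_N) : \tr (\sum_i F i) = \sum_i \tr (F i).
Proof. by elim/big_rec2: _ => [|i a b _ <-]; rewrite ?mxtrace0 ?mxtraceD. Qed.

Lemma tr_lin N k (rho : 'M[C]_N.+1) (M : 'I_k -> 'M[C]_N.+1) e :
  complex.Re (\tr (rho *m Tsum sgC M e)) = \sum_j sgR R (e j) * complex.Re (\tr (rho *m M j)).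
Proof.
rewrite /Tsum mulmx_sumr tr_sum Re_sum; apply: eq_bigr => j _.
by rewrite -scalemxAr mxtraceZ Re_sg.
Qed.

Lemma pow2N (x : R) r : (- x) ^+ (2 ^ r.+1) = x ^+ (2 ^ r.+1).
Proof. by rewrite expnS !exprM sqrrN. Qed.

Lemma claim1 N k (M : 'I_k -> 'M[C]_N.+1) (alpha : 'I_k -> R) (gamma : R) r
  (e : {ffun 'I_k -> bool}) (rho1 rho2 : 'M[C]_N.+1) :
  0 < gamma -> (forall j, is_hermitian (M j)) ->
  psd rho1 -> \tr rho1 = 1 -> psd rho2 -> \tr rho2 = 1 ->
  (forall j, if e j then alpha j + gamma <= complex.Re (\tr (rho1 *m M j))
             else complex.Re (\tr (rho1 *m M j)) <= alpha j - gamma) ->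
  (forall j, if ~~ e j then alpha j + gamma <= complex.Re (\tr (rho2 *m M j))
             else complex.Re (\tr (rho2 *m M j)) <= alpha j - gamma) ->
  (k%:R * gamma) ^+ (2 ^ r.+1) <= complex.Re (\tr (Tsum sgC M e ^+ (2 ^ r.+1))).
Proof.
move=> hg hH hp1 ht1 hp2 ht2 h1 h2.
have hT := herm_Tsum e hH.
set A := \sum_j sgR R (e j) * alpha j.
have hk : k%:R * gamma = \sum_(j < k) gamma by rewrite sumr_const card_ord mulr_natl.
have hx1 : A + k%:R * gamma <= complex.Re (\tr (rho1 *m Tsum sgC M e)).
  rewrite tr_lin hk /A -big_split /=; apply: ler_sum => j _.
  by have := h1 j; case: (e j) => /= h; lra.
have hx2 : complex.Re (\tr (rho2 *m Tsum sgC M e)) <= A - k%:R * gamma.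
  rewrite tr_lin hk /A -sumrB /=; apply: ler_sum => j _.
  by have := h2 j; case: (e j) => /= h; lra.
have hkg : 0 <= k%:R * gamma by rewrite mulr_ge0 // ltW.
case: (lerP 0 A) => hA.
  apply: le_trans (jensen_tr r hp1 ht1 hT).
  by apply: lerXn2r; rewrite ?nnegrE //; lra.
apply: le_trans (jensen_tr r hp2 ht2 hT).
rewrite -[X in _ <= X]pow2N; apply: lerXn2r; rewrite ?nnegrE //; lra.
Qed.

Lemma sum_cf k m : \sum_(f : {ffun 'I_m -> 'I_k}) cf sgC f = (Dmom R k m)%:C%C.
Proof.
have := @sum_Tsum1 _ [the algType C of 'M[C]_1] k sgC m.
rewrite -!scaler_suml => /(congr1 (fun A : 'M[C]_1 => A 0 0)); rewrite !mxE /= !mulr1 => <-.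
rewrite /Dmom rmorph_sum; apply: eq_bigr => e _; rewrite rmorphXn /= /Ssum rmorph_sum.
by congr (_ ^+ _); apply: eq_bigr => j _; rewrite sgCE.
Qed.

Lemma claim2 N k (M : 'I_k -> 'M[C]_N.+1) (B : R) m : 0 <= B ->
  (forall j v, vnorm (M j *m v) <= B * vnorm v) ->
  \sum_(e : {ffun 'I_k -> bool}) complex.Re (\tr (Tsum sgC M e ^+ m))
    <= N.+1%:R * B ^+ m * Dmom R k m.
Proof.
move=> hB hM.
rewrite -Re_sum -tr_sum sum_Tsum tr_sum.
apply: (le_trans (Re_le_cn _)); rewrite -lecR cnE.
apply: (le_trans (ler_norm_sum _ _ _)).
apply: (@le_trans _ _ (\sum_(f : {ffun 'I_m -> 'I_k}) cf sgC f * (N.+1%:R * B ^+ m)%:C%C)).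
  apply: ler_sum => f _; rewrite mxtraceZ normrM ger0_norm; last exact: cf_ge0.
  apply: ler_wpM2l; first exact: cf_ge0.
  apply: tr_bound => v; exact: (@prod_bound R N B hB m (fun i => M (f i)) (fun i => hM (f i)) v).
rewrite -mulr_suml sum_cf -rmorphM /= mulrC.
by [].
Qed.

Lemma core N n k (M : 'I_k -> 'M[C]_N.+1) (alpha : 'I_k -> R) (gamma B : R) :
  (N.+1 <= 2 ^ n)%N -> (0 < n)%N -> 0 < gamma -> 0 <= B ->
  (forall j, is_hermitian (M j)) ->
  (forall j v, vnorm (M j *m v) <= B * vnorm v) ->
  (forall y : 'I_k -> bool, exists rho : 'M[C]_N.+1, [/\ psd rho, \tr rho = 1 &
      forall j, if y j then alpha j + gamma <= complex.Re (\tr (rho *m M j))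
                else complex.Re (\tr (rho *m M j)) <= alpha j - gamma]) ->
  k%:R * gamma ^+ 2 <= 16%:R * n%:R * B ^+ 2.
Proof.
move=> hN hn hg hB hH hM hy.
have [k0|hk] := posnP k; first by rewrite k0 mul0r !mulr_ge0 ?sqr_ge0.
have /andP [hr1 hr2] := trunc_log_bounds (isT : (1 < 2)%N) hn.
set r := trunc_log 2 n in hr1 hr2.
set q := (2 ^ r.+1)%N.
have hq0 : (0 < q)%N by rewrite expn_gt0.
have hnq : (n <= q)%N by rewrite ltnW.
have hq2n : (q <= 2 * n)%N by rewrite /q expnS leq_mul2l.
have C1 : forall e : {ffun 'I_k -> bool},
    (k%:R * gamma) ^+ (2 ^ r.+2) <= complex.Re (\tr (Tsum sgC M e ^+ (2 ^ r.+2))).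
  move=> e; have [rho1 [p1 t1 h1]] := hy e; have [rho2 [p2 t2 h2]] := hy (fun j => ~~ e j).
  exact: (claim1 r.+1 hg hH p1 t1 p2 t2 h1 h2).
have S1 : 2%:R ^+ k * (k%:R * gamma) ^+ (2 ^ r.+2) <= N.+1%:R * B ^+ (2 ^ r.+2) * Dmom R k (2 ^ r.+2).
  apply: le_trans (claim2 _ hB hM).
  apply: (@le_trans _ _ (\sum_(e : {ffun 'I_k -> bool}) (k%:R * gamma) ^+ (2 ^ r.+2))).
    by rewrite sumr_const card_ffun card_bool card_ord -[X in _ <= X]mulr_natl natrX.
  by apply: ler_sum => e _; exact: C1.
have hm : (2 ^ r.+2 = 2 * q)%N by rewrite /q expnS.
rewrite hm in S1.
have S2 := le_trans S1 (ler_wpM2l (mulr_ge0 (ler0n _ _) (exprn_ge0 _ hB)) (Dbound R k q)).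
set X := k%:R * gamma ^+ 2 in S2 *.
set Y := 8%:R * q%:R * B ^+ 2.
have hX0 : 0 <= X by rewrite mulr_ge0 ?sqr_ge0.
have hY0 : 0 <= Y by rewrite !mulr_ge0 ?sqr_ge0.
have hkpos : 0 < k%:R ^+ q :> R by rewrite exprn_gt0 // ltr0n.
have E1 : (k%:R * gamma) ^+ (2 * q) = k%:R ^+ q * X ^+ q.
  by rewrite exprM -exprMn; congr (_ ^+ _); rewrite /X; ring.
have E2 : B ^+ (2 * q) * (4 * q * k)%:R ^+ q = k%:R ^+ q * (4%:R * q%:R * B ^+ 2) ^+ q.
  by rewrite exprM -!exprMn; congr (_ ^+ _); rewrite !natrM; ring.
have hNq : N.+1%:R <= 2%:R ^+ q :> R.
  by rewrite -natrX ler_nat (leq_trans hN) // leq_pexp2l.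
set Z := 4%:R * q%:R * B ^+ 2 in E2 *.
have hZ0 : 0 <= Z by rewrite !mulr_ge0 ?sqr_ge0.
have S2' : k%:R ^+ q * X ^+ q * 2%:R ^+ k <= N.+1%:R * (k%:R ^+ q * Z ^+ q) * 2%:R ^+ k.
  have eL : 2%:R ^+ k * (k%:R * gamma) ^+ (2 * q) = k%:R ^+ q * X ^+ q * 2%:R ^+ k.
    by rewrite E1 mulrC.
  have eR : N.+1%:R * B ^+ (2 * q) * (2%:R ^+ k * (4 * q * k)%:R ^+ q)
          = N.+1%:R * (k%:R ^+ q * Z ^+ q) * 2%:R ^+ k.
    by rewrite -E2; ring.
  by rewrite -eL -eR.
rewrite ler_pM2r ?exprn_gt0 ?ltr0n // in S2'.
have S3 : k%:R ^+ q * X ^+ q <= k%:R ^+ q * Y ^+ q.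
  apply: (le_trans S2').
  have -> : Y ^+ q = 2%:R ^+ q * Z ^+ q by rewrite -exprMn /Y /Z; congr (_ ^+ _); ring.
  rewrite mulrCA; apply: ler_wpM2l; first exact: exprn_ge0.
  by apply: ler_wpM2r; rewrite ?exprn_ge0.
rewrite ler_pM2l // in S3.
have S4 : X <= Y by rewrite -(ler_pXn2r hq0) ?nnegrE.
apply: (le_trans S4); rewrite /Y; apply: ler_wpM2r; first exact: sqr_ge0.
by rewrite -!natrM ler_nat; lia.
Qed.

Lemma main_d (X Theta : Type) (n d k : nat) (rho : Theta -> 'M[C]_d) (O : X -> 'M[C]_d)
  (gamma : R) : (0 < n)%N -> (0 < d)%N -> (d <= 2 ^ n)%N ->
  (forall th, density_matrix (rho th)) ->
  (forall x, is_hermitian (O x)) ->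
  has_ubound (spectral_norms O) -> 0 < gamma ->
  (exists (pts : 'I_k -> X) (alpha : 'I_k -> R), forall y : 'I_k -> bool,
     exists th, forall i, if y i then alpha i + gamma <= complex.Re (\tr (rho th *m O (pts i)))
                          else complex.Re (\tr (rho th *m O (pts i))) <= alpha i - gamma) ->
  k%:R * gamma ^+ 2 <= 16%:R * n%:R * sup_spectral_norm O ^+ 2.
Proof.
case: d rho O => [//|N] rho O hn _ hd hrho hO hub hg [pts [alpha hsh]].
have [k0|hk] := posnP k.
  rewrite k0 mul0r; apply: mulr_ge0; last exact: sqr_ge0.
  by apply: mulr_ge0; rewrite ler0n.
set B := sup_spectral_norm O.
have hspec : forall x, spectral_norm (O x) <= B.
  by move=> x; apply: (ub_le_sup hub); exists x.
have hM : forall j v, vnorm (O (pts j) *m v) <= B * vnorm v.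
  move=> j v; apply: (le_trans (op_bound _ _)); apply: ler_wpM2r; first exact: vnorm_ge0.
  exact: hspec.
have hB : 0 <= B.
  have e0 := @vnorm_delta R N.+1 0.
  apply: le_trans (hspec (pts (Ordinal hk))).
  apply: le_trans (spec_le (O (pts (Ordinal hk))) e0); exact: vnorm_ge0.
apply: (@core N n k (fun j => O (pts j)) alpha gamma B hd hn hg hB _ hM).
  by move=> j; exact: hO.
move=> y; have [th hf] := hsh y.
have [_ [hp ht]] := hrho th.
by exists (rho th); split.
Qed.

Lemma tr1 (rho A : 'M[C]_1) : \tr rho = 1 -> \tr (rho *m A) = A 0 0.
Proof.
rewrite /mxtrace !big_ord1 mxE big_ord1 => ->; exact: mul1r.
Qed.

Lemma n0_case (X Theta : Type) (k : nat) (rho : Theta -> 'M[C]_(2 ^ 0)) (O : X -> 'M[C]_(2 ^ 0))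
  (gamma : R) : (forall th, density_matrix (rho th)) -> 0 < gamma ->
  (exists (pts : 'I_k -> X) (alpha : 'I_k -> R), forall y : 'I_k -> bool,
     exists th, forall i, if y i then alpha i + gamma <= complex.Re (\tr (rho th *m O (pts i)))
                          else complex.Re (\tr (rho th *m O (pts i))) <= alpha i - gamma) ->
  k = 0%N.
Proof.
move=> hrho hg [pts [alpha hsh]].
have [//|hk] := posnP k.
set i0 := Ordinal hk.
have [th1 h1] := hsh (fun _ => true); have [th2 h2] := hsh (fun _ => false).
have := h1 i0; have := h2 i0; rewrite /=.
have [_ [_ t1]] := hrho th1; have [_ [_ t2]] := hrho th2.
rewrite (tr1 _ t1) (tr1 _ t2) => a b.
have F : forall z g : R, 0 < g -> z + g <= z - g -> False by move=> z g; lra.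
by have := F _ _ hg (le_trans b a).
Qed.
End Assemble.

Local Open Scope classical_set_scope.

Theorem mainTheorem2 :
  exists Cst : rat, 0 < Cst /\
  forall (R : realType) (X Theta : Type) (n : nat)
    (rho : Theta -> 'M[R[i]]_(2 ^ n)) (O : X -> 'M[R[i]]_(2 ^ n)),
    (forall th, density_matrix (rho th)) ->
    (forall x, is_hermitian (O x)) ->
    has_ubound (spectral_norms O) ->
    forall gamma : R, 0 < gamma ->
    forall k : nat, fat_shatters (trace_class rho O) gamma k ->
      (k%:R : R) <= ratr Cst * n%:R * sup_spectral_norm O ^+ 2 / gamma ^+ 2.
Proof.
exists 16%:R; split; first by rewrite ltr0n.
move=> R X Theta n rho O hrho hO hub gamma hg k hfat.
have hfat' : exists (pts : 'I_k -> X) (alpha : 'I_k -> R), forall y : 'I_k -> bool,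
     exists th, forall i, if y i then alpha i + gamma <= complex.Re (\tr (rho th *m O (pts i)))
                          else complex.Re (\tr (rho th *m O (pts i))) <= alpha i - gamma.
  case: hfat => pts [alpha hsh]; exists pts, alpha => y.
  by have [f [th _ <-] hf] := hsh y; exists th.
rewrite ler_pdivlMr ?exprn_gt0 // rmorph_nat.
have [n0|hn] := posnP n.
  subst n; rewrite (n0_case hrho hg hfat') mul0r.
  apply: mulr_ge0; last exact: sqr_ge0.
  by apply: mulr_ge0; rewrite ler0n.
by apply: (main_d hn (expn_gt0 2 n) (leqnn _) hrho hO hub hg hfat').
Qed.
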